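(* Let $A$ be a real $n\times n$ nonsingular skew-symmetric matrix ($A^t=-A$), $b\in\mathbb{R}^n$, and $x$ the solution of $Ax=b$. Let $m\ge 0$, $q_e=\lceil m/2\rceil$, $q_o=\lfloor m/2\rfloor$, and let $z\in\mathcal{K}_m(A,b)$ be written as $z=z_e+z_o$ with $z_e\in\mathcal{K}_{q_e}(A^2,b)$ and $z_o\in\mathcal{K}_{q_o}(A^2,Ab)$. Then \[\|z-x\|^2=\|z_o-x\|^2+\|z_e\|^2\quad\text{and}\quad \|b-Az\|^2=\|b-Az_o\|^2+\|Az_e\|^2.\]
   Context: For a matrix $B$, a vector $c$ and an integer $m\ge 0$, the Krylov subspace is $\mathcal{K}_m(B,c)=\operatorname{span}\{c,Bc,\ldots,B^{m-1}c\}$ (with $\mathcal{K}_0(B,c)=\{0\}$). $\|\cdot\|$ is the Euclidean norm. Every $z\in\mathcal{K}_m(A,b)$ admits such a decomposition by grouping even and odd powers of $A$. *)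

(* Defs.v *)
(* Real numbers are modelled by an arbitrary real closed field. *)
From HB Require Import structures.
From mathcomp Require Import all_boot all_order all_algebra.
Set Implicit Arguments. Unset Strict Implicit. Unset Printing Implicit Defensive.
Import Order.TTheory GRing.Theory Num.Theory.
Local Open Scope ring_scope.

Definition vnorm (R : rcfType) (n : nat) (v : 'cV[R]_n) : R :=
  Num.sqrt (\sum_(i < n) (v i 0) ^+ 2).

Definition mxpow (R : rcfType) (n : nat) (B : 'M[R]_n) (k : nat) : 'M[R]_n :=
  iter k (fun M => B *m M) 1%:M.

Definition in_krylov (R : rcfType) (n m : nat) (B : 'M[R]_n) (c : 'cV[R]_n)
  (z : 'cV[R]_n) : Prop :=
  exists a : 'I_m -> R, z = \sum_(i < m) a i *: (mxpow B i *m c).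

(* Main.v *)
Require Import Defs.
From HB Require Import structures.
From mathcomp Require Import all_boot all_order all_algebra.
Import Order.TTheory GRing.Theory Num.Theory.
Local Open Scope ring_scope.

Section S.
Variables (R : rcfType) (n : nat).
Implicit Types (u v w : 'cV[R]_n).
Definition dot u v : R := (u^T *m v) 0 0.

Lemma dotDl u v w : dot (u + v) w = dot u w + dot v w.
Proof. by rewrite /dot raddfD /= mulmxDl mxE. Qed.
Lemma dotDr u v w : dot w (u + v) = dot w u + dot w v.
Proof. by rewrite /dot mulmxDr mxE. Qed.
Lemma dotNl u w : dot (- u) w = - dot u w.
Proof. by rewrite /dot raddfN /= mulNmx mxE. Qed.
Lemma dotNr u w : dot w (- u) = - dot w u.
Proof. by rewrite /dot mulmxN mxE. Qed.
Lemma dotZl a u w : dot (a *: u) w = a * dot u w.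
Proof. by rewrite /dot linearZ /= -scalemxAl mxE. Qed.
Lemma dotZr a u w : dot w (a *: u) = a * dot w u.
Proof. by rewrite /dot -scalemxAr mxE. Qed.
Lemma dot_suml N (F : 'I_N -> 'cV[R]_n) w : dot (\sum_i F i) w = \sum_i dot (F i) w.
Proof. by rewrite /dot raddf_sum /= mulmx_suml summxE. Qed.
Lemma dot_sumr N (F : 'I_N -> 'cV[R]_n) w : dot w (\sum_i F i) = \sum_i dot w (F i).
Proof. by rewrite /dot mulmx_sumr summxE. Qed.
Lemma dotC u v : dot u v = dot v u.
Proof. rewrite /dot; have -> : v^T *m u = (u^T *m v)^T by rewrite trmx_mul trmxK.
by rewrite [RHS]mxE. Qed.
Lemma dot_norm u : vnorm u ^+ 2 = dot u u.
Proof.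
rewrite /vnorm sqr_sqrtr; last by apply: sumr_ge0 => i _; exact: sqr_ge0.
by rewrite /dot mxE; apply: eq_bigr => i _; rewrite mxE expr2.

Qed.

Lemma mxpowSB (B : 'M[R]_n) k : mxpow B k.+1 = B *m mxpow B k. Proof. by []. Qed.
Variable A : 'M[R]_n.
Hypothesis hskew : A^T = - A.
Notation P := (mxpow A).

Lemma mxpowS k : P k.+1 = A *m P k. Proof. by []. Qed.
Lemma mxpowD i j : P (i + j) = P i *m P j.
Proof. elim: i => [|i IH]; first by rewrite mul1mx.
by rewrite addSn !mxpowS IH mulmxA. Qed.
Lemma mxpowSr k : P k.+1 = P k *m A.
Proof. by rewrite -addn1 mxpowD /mxpow /= mulmx1. Qed.
Lemma mxpow2 i : mxpow (A *m A) i = P (i + i).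
Proof. elim: i => [|i IH] //. by rewrite mxpowSB IH addSn addnS !mxpowS mulmxA. Qed.

Lemma dotA u w : dot (A *m u) w = - dot u (A *m w).
Proof. by rewrite /dot trmx_mul hskew mulmxN mulNmx mxE -mulmxA. Qed.
Lemma dotP i u w : dot (P i *m u) w = (-1) ^+ i * dot u (P i *m w).
Proof.
elim: i u w => [|i IH] u w; first by rewrite !mul1mx mul1r.
rewrite mxpowS -mulmxA dotA IH mulmxA -mxpowSr exprS.
by rewrite mulN1r mulNr.
Qed.
Lemma orth x i j : odd (i + j) -> dot (P i *m x) (P j *m x) = 0.
Proof.
move=> hodd; rewrite dotP mulmxA -mxpowD.
set d := dot x _.
have : d = - d.
  by rewrite {1}/d dotC dotP -signr_odd hodd expr1 mulN1r.
move=> /eqP; rewrite -subr_eq0 opprK -mulr2n mulrn_eq0 /= => /eqP ->.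
by rewrite mulr0.
Qed.
Lemma orth_sum x N M (a : 'I_N -> R) (c : 'I_M -> R) f g :
  (forall i j, odd (f i + g j)) ->
  dot (\sum_i a i *: (P (f i) *m x)) (\sum_j c j *: (P (g j) *m x)) = 0.
Proof.
move=> h; rewrite dot_suml big1 // => i _; rewrite dotZl dot_sumr big1 ?mulr0 // => j _.
by rewrite dotZr orth ?mulr0.
Qed.
End S.
Arguments dotC {R n}.
Arguments dot {R n}.
Arguments orth {R n A}.
Arguments orth_sum {R n A}.
Arguments mxpow2 {R n}.
Arguments mxpowSr {R n}.

Lemma dot_expand (R : rcfType) n (u v : 'cV[R]_n) :
  dot v u = 0 -> dot (u + v) (u + v) = dot u u + dot v v.
Proof.
move=> h; rewrite dotDl !dotDr h (dotC u v) h addr0 add0r //.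
Qed.
Lemma dotNN (R : rcfType) n (u v : 'cV[R]_n) : dot (- u) (- v) = dot u v.
Proof. by rewrite dotNl dotNr opprK. Qed.

Theorem theorem2 (R : rcfType) (n : nat) (A : 'M[R]_n) (b x : 'cV[R]_n)
  (hskew : A^T = - A) (hinv : A \in unitmx) (hx : A *m x = b)
  (m : nat) (z ze zo : 'cV[R]_n)
  (hz : in_krylov m A b z)
  (hze : in_krylov (uphalf m) (A *m A) b ze)
  (hzo : in_krylov m./2 (A *m A) (A *m b) zo)
  (hdec : z = ze + zo) :
  vnorm (z - x) ^+ 2 = vnorm (zo - x) ^+ 2 + vnorm ze ^+ 2 /\
  vnorm (b - A *m z) ^+ 2 = vnorm (b - A *m zo) ^+ 2 + vnorm (A *m ze) ^+ 2.
Proof.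
subst z; case: hze => a Ea; case: hzo => c Ec.
have {}Ea : ze = \sum_(i < uphalf m) a i *: (mxpow A (i + i).+1 *m x).
  by rewrite Ea; apply: eq_bigr => i _; rewrite mxpow2 -hx mulmxA -mxpowSr.
have {}Ec : zo = \sum_(j < m./2) c j *: (mxpow A (j + j).+2 *m x).
  by rewrite Ec; apply: eq_bigr => j _; rewrite mxpow2 -hx !mulmxA -!mxpowSr.
have AE : A *m ze = \sum_(i < uphalf m) a i *: (mxpow A (i + i).+2 *m x).
  by rewrite Ea mulmx_sumr; apply: eq_bigr => i _; rewrite -scalemxAr mulmxA.
have AO : A *m zo = \sum_(j < m./2) c j *: (mxpow A (j + j).+3 *m x).
  by rewrite Ec mulmx_sumr; apply: eq_bigr => j _; rewrite -scalemxAr mulmxA.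
have oddE : forall i j : nat, odd ((i + i).+1 + (j + j).+2).
  by move=> i j; rewrite oddD /= !oddD !addbb.
have oddE2 : forall i j : nat, odd ((i + i).+2 + (j + j).+3).
  by move=> i j; rewrite oddD /= !oddD !addbb.
split.
- rewrite !dot_norm.
  have -> : ze + zo - x = (zo - x) + ze by rewrite [ze + zo]addrC addrAC.
  apply: dot_expand; rewrite dotDr dotNr.
  have -> : dot ze zo = 0 by rewrite Ea Ec; exact: (orth_sum hskew).
  rewrite Ea dot_suml big1 ?oppr0 ?addr0 // => i _.
  rewrite dotZl -{2}[x]mul1mx (_ : 1%:M = mxpow A 0) // (orth hskew) ?mulr0 //.
  by rewrite addn0 /= oddD addbb.
- rewrite !dot_norm.
  have -> : b - A *m (ze + zo) = (b - A *m zo) + - (A *m ze).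
    by rewrite mulmxDr opprD addrA addrAC.
  rewrite dot_expand ?dotNN // dotNl dotDr dotNr.
  have -> : dot (A *m ze) (A *m zo) = 0 by rewrite AE AO; exact: (orth_sum hskew).
  rewrite AE dot_suml big1 ?oppr0 ?addr0 ?oppr0 // => i _.
  have -> : b = mxpow A 1 *m x by rewrite -hx /mxpow /= mulmx1.
  rewrite dotZl (orth hskew) ?mulr0 //.
  by rewrite oddD /= !oddD !addbb.
Qed.
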